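(* Let $V$ be a finite-dimensional vector space over a field and let $G$ be a (not necessarily amenable) group. Then a symmetric linear cellular automaton $\tau:V^G\to V^G$ is surjective if and only if it is pre-injective.
   Context: A linear cellular automaton over $G$ with alphabet $V$ is a linear map $\tau:V^G\to V^G$ for which there are a finite set $M\subset G$ and linear maps $A_m:V\to V$ ($m\in M$) with $\tau(f)(g)=\sum_{m\in M}A_mf(gm)$ for all $f\in V^G$, $g\in G$. Writing $V=\mathbb{K}^r$, the transpose $\tau'$ of $\tau$ is the linear map whose matrix with respect to the basis $\{\delta_g^i\}$ of finitely supported functions ($\delta_g^i(g)=e_i$, $\delta_g^i(h)=0$ for $h\neq g$) is the transpose of the matrix of $\tau$; explicitly $\tau'(f)(g)=\sum_{m\in M}A_m^{T}f(gm^{-1})$. $\tau$ is symmetric if $\tau'=\tau$. A linear map on $V^G$ is pre-injective if its restriction to the finitely supported functions is injective. *)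

(* Defs.v *)
From HB Require Import structures.
From mathcomp Require Import all_boot all_order all_algebra monoid.
Set Implicit Arguments. Unset Strict Implicit. Unset Printing Implicit Defensive.
Import GRing.Theory.
Local Open Scope ring_scope.

(* G : an arbitrary (possibly infinite) group, MathComp's [groupType] from
   boot/monoid.v.  V = K^r is represented by column vectors 'cV[K]_r.
   Configurations are functions G -> 'cV[K]_r. *)

Definition lca (G : groupType) (K : fieldType) (r : nat)
  (M : seq G) (A : G -> 'M[K]_r) (f : G -> 'cV[K]_r) : G -> 'cV[K]_r :=
  fun g => \sum_(m <- M) A m *m f (g * m)%g.

Definition lca_transpose (G : groupType) (K : fieldType) (r : nat)
  (M : seq G) (A : G -> 'M[K]_r) (f : G -> 'cV[K]_r) : G -> 'cV[K]_r :=
  fun g => \sum_(m <- M) (A m)^T *m f (g * m^-1)%g.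

Definition lca_symmetric (G : groupType) (K : fieldType) (r : nat)
  (M : seq G) (A : G -> 'M[K]_r) : Prop :=
  lca_transpose M A = lca M A.

Definition fin_supp (G : eqType) (K : fieldType) (r : nat) (f : G -> 'cV[K]_r) : Prop :=
  exists s : seq G, forall g, g \notin s -> f g = 0.

Definition surjective_map (X Y : Type) (t : X -> Y) : Prop :=
  forall y, exists x, t x = y.

Definition pre_injective (G : eqType) (K : fieldType) (r : nat)
  (t : (G -> 'cV[K]_r) -> (G -> 'cV[K]_r)) : Prop :=
  forall f1 f2, fin_supp f1 -> fin_supp f2 -> t f1 = t f2 -> f1 = f2.

(* Main.v *)
Require Import Defs.
From HB Require Import structures.
From mathcomp Require Import all_boot all_order all_algebra monoid.
From mathcomp Require Import boolp classical_sets.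
Import GRing.Theory.
Local Open Scope ring_scope.

Section Pf.
Variables (G : groupType) (K : fieldType) (r : nat) (M : seq G) (A : G -> 'M[K]_r).
Local Notation V := 'cV[K]_r.
Local Notation tau := (lca M A).
Local Notation taut := (lca_transpose M A).

Definition dotg (a b : G -> V) (g : G) : K := \sum_(i < r) a g i 0 * b g i 0.
Definition pair (s : seq G) (a b : G -> V) : K := \sum_(g <- undup s) dotg a b g.
Definition smul (s : seq G) : seq G := [seq (x * m)%g | x <- s, m <- M].
Definition supp_in (s : seq G) (a : G -> V) := forall g, g \notin s -> a g = 0.

Lemma sum_indep (F : G -> K) s1 s2 :
  (forall g, F g != 0 -> g \in s1) -> (forall g, F g != 0 -> g \in s2) ->
  \sum_(g <- undup s1) F g = \sum_(g <- undup s2) F g.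
Proof.
move=> h1 h2.
have E (t u : seq G) : (forall g, F g != 0 -> g \in u) ->
   \sum_(g <- undup t) F g = \sum_(g <- [seq x <- undup t | x \in u]) F g.
  move=> hu; rewrite big_filter [RHS]big_mkcond /=; apply: eq_bigr => g _.
  by case: ifP => // gu; apply/eqP; apply: contraFT gu => /hu.
rewrite (E s1 s2 h2) (E s2 s1 h1); apply: perm_big.
apply: uniq_perm; rewrite ?filter_uniq ?undup_uniq // => g.
by rewrite !mem_filter !mem_undup andbC.
Qed.

Lemma pair_indep a b s1 s2 : supp_in s1 a -> supp_in s2 a -> pair s1 a b = pair s2 a b.
Proof.
move=> h1 h2; apply: sum_indep => g; apply: contraR => gs.
  by rewrite /dotg big1 // => i _; rewrite (h1 g gs) mxE mul0r.
by rewrite /dotg big1 // => i _; rewrite (h2 g gs) mxE mul0r.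
Qed.

Lemma pair_lin2 s a b F1 F2 h :
  pair s (fun g => a *: F1 g + b *: F2 g) h = a * pair s F1 h + b * pair s F2 h.
Proof.
rewrite /pair !mulr_sumr -big_split; apply: eq_bigr => g _.
rewrite /dotg !mulr_sumr -big_split; apply: eq_bigr => i _.
by rewrite !mxE mulrDl !mulrA.
Qed.

Lemma pair_subr s a h1 h2 :
  pair s a (fun g => h1 g - h2 g) = pair s a h1 - pair s a h2.
Proof.
rewrite /pair -sumrB; apply: eq_bigr => g _.
rewrite /dotg -sumrB; apply: eq_bigr => i _.
by rewrite !mxE mulrBr.
Qed.

Lemma pair0l s h : pair s (fun _ => 0) h = 0.
Proof. by rewrite /pair big1 // => g _; rewrite /dotg big1 // => i _; rewrite mxE mul0r. Qed.

Lemma taut_lin2 a b f1 f2 :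
  taut (fun g => a *: f1 g + b *: f2 g) = fun g => a *: taut f1 g + b *: taut f2 g.
Proof.
apply: funext => g; rewrite /lca_transpose !scaler_sumr -big_split; apply: eq_bigr => m _.
by rewrite mulmxDr !scalemxAr.
Qed.

Lemma tau_lin2 a b f1 f2 :
  tau (fun g => a *: f1 g + b *: f2 g) = fun g => a *: tau f1 g + b *: tau f2 g.
Proof.
apply: funext => g; rewrite /lca !scaler_sumr -big_split; apply: eq_bigr => m _.
by rewrite mulmxDr !scalemxAr.
Qed.

Lemma tau0 : tau (fun _ => 0) = fun _ => 0.
Proof. by apply: funext => g; rewrite /lca big1 // => m _; rewrite mulmx0. Qed.

Lemma taut_supp f s : supp_in s f -> supp_in (smul s) (taut f).
Proof.
move=> hf g gs; rewrite /lca_transpose big_seq big1 // => m mM.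
rewrite hf ?mulmx0 //; apply: contra gs => h.
by rewrite -(mulgVK m g); apply: allpairs_f.
Qed.

Lemma taut_entry f g (i : 'I_r) :
 taut f g i 0 = \sum_(m <- M) ((A m)^T *m f (g * m^-1)%g) i 0.
Proof. by rewrite /lca_transpose summxE. Qed.

Lemma tau_entry f g (i : 'I_r) :
 tau f g i 0 = \sum_(m <- M) (A m *m f (g * m)%g) i 0.
Proof. by rewrite /lca summxE. Qed.

Lemma dotA (B : 'M[K]_r) (u v : V) :
  \sum_(i < r) (B^T *m u) i 0 * v i 0 = \sum_(i < r) u i 0 * (B *m v) i 0.
Proof.
under eq_bigr => i _ do rewrite mxE mulr_suml.
rewrite exchange_big /=; apply: eq_bigr => j _ /=.
rewrite mxE mulr_sumr.
under eq_bigr => i _ do rewrite mxE [B j i * _]mulrC -mulrA.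
by [].
Qed.

Lemma adj f s h : supp_in s f -> pair (smul s) (taut f) h = pair s f (tau h).
Proof.
move=> hf.
pose Phi m g' := \sum_(i < r) f g' i 0 * (A m *m h (g' * m)%g) i 0.
have L : pair (smul s) (taut f) h =
    \sum_(m <- M) \sum_(g <- undup (smul s)) Phi m (g * m^-1)%g.
  rewrite /pair [RHS]exchange_big; apply: eq_bigr => g _.
  rewrite /dotg.
  under [LHS]eq_bigr => i _ do rewrite taut_entry mulr_suml.
  rewrite exchange_big /=; apply: eq_bigr => m _.
  by rewrite dotA /Phi mulgVK.
have R : pair s f (tau h) = \sum_(m <- M) \sum_(g <- undup s) Phi m g.
  rewrite /pair [RHS]exchange_big; apply: eq_bigr => g _.
  rewrite /dotg.
  under [LHS]eq_bigr => i _ do rewrite tau_entry mulr_sumr.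
  by rewrite exchange_big.
rewrite L R big_seq [RHS]big_seq; apply: eq_bigr => m mM.
rewrite -(big_map (fun g => g * m^-1)%g predT (Phi m)).
rewrite -[X in \sum_(_ <- X) _]undup_id; last first.
  by rewrite map_inj_uniq ?undup_uniq // => x y /mulIg.
apply: sum_indep => g.
- move=> hg; apply/mapP; exists (g * m)%g; last by rewrite mulgK.
  rewrite mem_undup; apply: allpairs_f => //; apply: contraR hg => gs.
  by rewrite /Phi big1 // => i _; rewrite hf // mxE mul0r.
- move=> hg; apply: contraR hg => gs.
  by rewrite /Phi big1 // => i _; rewrite hf // mxE mul0r.
Qed.

Arguments adj [f s] h.
Arguments taut_supp [f s].
Arguments pair_indep [a] b [s1 s2].

Lemma mxsubE (a b : V) i : (a - b) i 0 = a i 0 - b i 0.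
Proof. by rewrite !mxE. Qed.

Definition delta (g : G) (i : 'I_r) : G -> V :=
  fun g' => if g' == g then delta_mx i 0 else 0.

Lemma delta_entry g i g' j : delta g i g' j 0 = ((g' == g) && (j == i))%:R.
Proof. by rewrite /delta; case: eqP => _; rewrite !mxE ?andbT. Qed.

Lemma pair_single s (a b : G -> V) g0 (i0 : 'I_r) :
  (forall g i, (g, i) != (g0, i0) -> a g i 0 * b g i 0 = 0) ->
  pair s a b = if g0 \in s then a g0 i0 0 * b g0 i0 0 else 0.
Proof.
move=> hz; rewrite /pair; case: ifP => gs.
  rewrite (bigD1_seq g0) ?mem_undup ?undup_uniq //= big1 => [|g ng]; last first.
    rewrite /dotg big1 // => i _; apply: hz.
    by apply: contra ng => /eqP [->].
  rewrite addr0 /dotg (bigD1 i0) //= big1 ?addr0 // => i ni; apply: hz.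
  by apply: contra ni => /eqP [->].
rewrite big_seq big1 // => g; rewrite mem_undup => gs'.
rewrite /dotg big1 // => i _; apply: hz; apply: contraFN gs => /eqP [<- _] //.
Qed.

Lemma pair_delta_r s a g i : supp_in s a -> pair s a (delta g i) = a g i 0.
Proof.
move=> sa; rewrite (pair_single _ _ _ g i).
  case: ifP => gs; first by rewrite delta_entry !eqxx mulr1.
  by rewrite sa ?gs // mxE.
move=> g' i' ne; rewrite delta_entry.
case: andP => [[/eqP e1 /eqP e2]|_]; last by rewrite mulr0.
by move: ne; rewrite e1 e2 eqxx.
Qed.

Lemma pair_delta_l g i b : pair [:: g] (delta g i) b = b g i 0.
Proof.
rewrite (pair_single _ _ _ g i).
  by rewrite mem_head delta_entry !eqxx mul1r.
move=> g' i' ne; rewrite delta_entry.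
case: andP => [[/eqP e1 /eqP e2]|_]; last by rewrite mul0r.
by move: ne; rewrite e1 e2 eqxx.
Qed.

Lemma surj_preinj : taut = tau -> surjective_map tau -> pre_injective tau.
Proof.
move=> sym su f1 f2 [s1 h1] [s2 h2] e.
apply: funext => g; apply/matrixP => i j; rewrite (ord1 j).
pose f := fun g => 1 *: f1 g + (-1) *: f2 g.
have sf : supp_in (s1 ++ s2) f.
  move=> x; rewrite mem_cat negb_or => /andP[x1 x2].
  by rewrite /f h1 // h2 // !scaler0 addr0.
have tf : taut f = fun _ => 0.
  rewrite sym /f tau_lin2 e; apply: funext => x.
  by rewrite scale1r scaleN1r subrr.
have [hh ehh] := su (delta g i).
have := adj hh sf; rewrite tf pair0l ehh pair_delta_r // /f !mxE.
move/esym/eqP; rewrite mul1r mulN1r subr_eq0 => /eqP.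
by [].
Qed.

Section Zorn.
Variable y : G -> V.
Hypothesis PI : forall f s, supp_in s f -> taut f = (fun _ => 0) -> f = (fun _ => 0).

Local Notation T := ((G * 'I_r) * K)%type.
Definition dom (S : set T) x := exists v, S (x, v).
Definition functional (S : set T) := forall x v w, S (x, v) -> S (x, w) -> v = w.
Definition agree (S : set T) (h : G -> V) := forall x, dom S x -> S (x, h x.1 x.2 0).
Definition Cons (S : set T) := forall f s h, supp_in s f -> agree S h ->
  (forall g i, taut f g i 0 != 0 -> dom S (g, i)) ->
  pair (smul s) (taut f) h = pair s f y.
Definition Pgood (S : set T) := functional S /\ Cons S.

Lemma cons_zero f s h : supp_in s f -> (forall g i, taut f g i 0 = 0) ->
  pair (smul s) (taut f) h = pair s f y.
Proof.
move=> sf z.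
have tz : taut f = fun _ => 0.
  by apply: funext => g; apply/matrixP => i j; rewrite (ord1 j) z mxE.
by rewrite tz pair0l (PI _ _ sf tz) pair0l.
Qed.

Lemma chain_good (F : set (set T)) :
  (F `<=` Pgood)%classic -> total_on F subset -> Pgood (\bigcup_(X in F) X)%classic.
Proof.
move=> FP tot; set U := (\bigcup_(X in F) X)%classic.
have fU : functional U.
  move=> x v w [X FX Xv] [Y FY Yw]; case: (tot X Y FX FY) => sub.
  - exact: (FP Y FY).1 x v w (sub _ Xv) Yw.
  - exact: (FP X FX).1 x v w Xv (sub _ Yw).
split => // f s h sf ag cov.
have ind : forall l : seq (G * 'I_r), (forall x, x \in l -> dom U x) ->
    l = [::] \/ exists2 X, F X & forall x, x \in l -> dom X x.
  elim => [|x l IH] hl; first by left.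
  right; have [v [X FX Xv]] := hl x (mem_head _ _).
  have hl' : forall z, z \in l -> dom U z by move=> z zl; apply: hl; rewrite inE zl orbT.
  case: (IH hl') => [->|[Y FY hY]].
    by exists X => // z; rewrite inE => /eqP ->; exists v.
  case: (tot X Y FX FY) => sub.
  - exists Y => // z; rewrite inE => /orP [/eqP ->|zl]; last exact: hY.
    by exists v; apply: sub.
  - exists X => // z; rewrite inE => /orP [/eqP ->|zl]; first by exists v.
    by have [w Yw] := hY z zl; exists w; apply: sub.
set l := [seq x <- [seq (g, i) | g <- smul s, i <- enum 'I_r] | taut f x.1 x.2 0 != 0].
have inl g i : taut f g i 0 != 0 -> (g, i) \in l.
  move=> nz; rewrite mem_filter /= nz /=; apply: allpairs_f; last by rewrite mem_enum.
  by apply: contraR nz => gs; rewrite (taut_supp sf _ gs) mxE.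
have hl : forall x, x \in l -> dom U x.
  by move=> [g i]; rewrite mem_filter /= => /andP[nz _]; exact: cov g i nz.
case: (ind l hl) => [l0|[X FX hX]].
  apply: cons_zero => // g i; apply/eqP; apply: contraT => nz.
  by have := inl g i nz; rewrite l0.
apply: (FP X FX).2 => //.
  move=> x [v Xv]; have Uv : U (x, v) by exists X.
  have Uh := ag x (ex_intro _ v Uv).
  by rewrite -(fU x v _ Uv Uh).
by move=> g i nz; exact: hX _ (inl g i nz).
Qed.

Lemma extend S : Pgood S -> forall x0, ~ dom S x0 -> exists v, Pgood (S `|` [set (x0, v)])%classic.
Proof.
move=> [fS cS] [g0 i0] nd.
have [h0' Hh0] : {h0' : G * 'I_r -> K &
    forall x, (dom S x -> S (x, h0' x)) /\ (~ dom S x -> h0' x = 0)}.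
  apply: (@choice _ _ (fun x v => (dom S x -> S (x, v)) /\ (~ dom S x -> v = 0))) => x; case: (pselect (dom S x)) => [[v Sv]|nx].
    by exists v; split => // nx; case: nx; exists v.
  by exists 0; split => // dx; case: nx.
pose h0 := fun g => \col_(i < r) h0' (g, i) : V.
have h0E g i : h0 g i 0 = h0' (g, i) by rewrite mxE.
have ag0 : agree S h0 by move=> [g i] dx; rewrite /= h0E; exact: (Hh0 (g, i)).1 dx.
have h00 : h0 g0 i0 0 = 0 by rewrite h0E; exact: (Hh0 _).2 nd.
pose adm f s := supp_in s f /\
  forall g i, taut f g i 0 != 0 -> dom S (g, i) \/ (g, i) = (g0, i0).
pose w f := taut f g0 i0 0.
pose c f s := pair s f y - pair (smul s) (taut f) h0.
have Z f s : adm f s -> w f = 0 -> c f s = 0.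
  move=> [sf cv] wz; apply/eqP; rewrite subr_eq0; apply/eqP; symmetry.
  apply: cS => // g i nz; case: (cv g i nz) => // [[eg ei]].
  by move: nz; rewrite eg ei -/(w f) wz eqxx.
have lin f1 s1 f2 s2 a b : supp_in s1 f1 -> supp_in s2 f2 ->
    c (fun g => a *: f1 g + b *: f2 g) (s1 ++ s2) = a * c f1 s1 + b * c f2 s2.
  move=> h1 h2.
  have h1' : supp_in (s1 ++ s2) f1.
    by move=> x; rewrite mem_cat negb_or => /andP[x1 _]; exact: h1.
  have h2' : supp_in (s1 ++ s2) f2.
    by move=> x; rewrite mem_cat negb_or => /andP[_ x2]; exact: h2.
  rewrite /c taut_lin2 !pair_lin2 (pair_indep y h1' h1) (pair_indep y h2' h2).
  rewrite (pair_indep h0 (taut_supp h1') (taut_supp h1)).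
  rewrite (pair_indep h0 (taut_supp h2') (taut_supp h2)).
  by rewrite mulrBr mulrBr opprD addrACA.
have [v Hv] : exists v, forall f s, adm f s -> c f s = w f * v.
  case: (pselect (exists f s, adm f s /\ w f != 0)) => [[f0 [s0 [a0 nz0]]]|none].
    exists (c f0 s0 / w f0) => f s af.
    pose f' := fun g => w f0 *: f g + (- w f) *: f0 g.
    have af' : adm f' (s ++ s0).
      split.
        move=> x; rewrite mem_cat negb_or => /andP[xs xs0].
        by rewrite /f' af.1 // a0.1 // !scaler0 addr0.
      move=> g i; rewrite /f' taut_lin2 => nz.
      case: (eqVneq (taut f g i 0) 0) => [e1|n1]; last exact: af.2 _ _ n1.
      case: (eqVneq (taut f0 g i 0) 0) => [e2|n2]; last exact: a0.2 _ _ n2.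
      by move: nz; rewrite !mxE e1 e2 !mulr0 addr0 eqxx.
    have wf' : w f' = 0.
      by rewrite /w /f' taut_lin2 !mxE -/(w f) -/(w f0) mulNr mulrC subrr.
    have := Z _ _ af' wf'; rewrite /f' lin; [|exact: af.1|exact: a0.1].
    move/eqP; rewrite mulNr subr_eq0 => /eqP e.
    rewrite -[c f s](mulKf nz0) e.
    by rewrite mulrCA [_^-1 * _]mulrC.
  exists 0 => f s af; rewrite mulr0; apply: (Z f s af); apply/eqP; apply: contraT => nz.
  by exfalso; apply: none; exists f, s.
exists v; split.
  move=> x a b [Sa|ea] [Sb|eb].
  - exact: fS Sa Sb.
  - by case: eb => ex _; case: nd; exists a; rewrite -ex.
  - by case: ea => ex _; case: nd; exists b; rewrite -ex.
  - by case: ea => _ ->; case: eb => _ ->.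
move=> f s h sf ag cov.
have af : adm f s.
  split => // g i nz; case: (cov g i nz) => u [Su|eu]; first by left; exists u.
  by right; case: eu => -> -> _.
have agS : agree S h.
  move=> x dx; have dx' : dom (S `|` [set ((g0, i0), v)])%classic x.
    by case: dx => u Su; exists u; left.
  case: (ag x dx') => // [[ex _]].
  by case: nd; rewrite -ex.
have hv : h g0 i0 0 = v.
  have dx : dom (S `|` [set ((g0, i0), v)])%classic (g0, i0) by exists v; right.
  case: (ag _ dx) => [S0|[]] //.
  by case: nd; exists (h g0 i0 0).
have D : pair (smul s) (taut f) h - pair (smul s) (taut f) h0 = w f * v.
  rewrite -pair_subr (pair_single _ _ _ g0 i0).
    case: ifP => gin; first by rewrite !mxE hv -h0E h00 subr0.
    by rewrite /w (taut_supp sf) ?gin // mxE mul0r.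
  move=> g i ne; case: (eqVneq (taut f g i 0) 0) => [->|nz]; first by rewrite mul0r.
  case: (cov g i nz) => u [Su|eu].
    have dS : dom S (g, i) by exists u.
    have e1 := agS _ dS; have e2 := ag0 _ dS.
    by rewrite mxsubE (fS _ _ _ e1 e2) subrr mulr0.
  by case: eu => eg ei; move: ne; rewrite eg ei eqxx.
have := Hv f s af; rewrite /c => e.
move: D; rewrite -e => /(congr1 (fun t => t + pair (smul s) (taut f) h0)).
by rewrite !subrK.
Qed.

Lemma exists_sol : exists h, tau h = y.
Proof.
have [S [PS maxS]] := Zorn_bigcup chain_good.
have full : forall x, dom S x.
  move=> x; case: (pselect (dom S x)) => // nd.
  have [v Pv] := extend S PS x nd.
  exfalso; apply: (maxS _ _ Pv); split; first by move=> z Sz; left.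
  by move=> sub; apply: nd; exists v; apply: sub; right.
have [h' Hh'] := choice full.
pose h := fun g => \col_(i < r) h' (g, i) : V.
exists h; apply: funext => g; apply/matrixP => i j; rewrite (ord1 j).
have sd : supp_in [:: g] (delta g i).
  by move=> x; rewrite inE => nx; rewrite /delta (negbTE nx).
have := PS.2 (delta g i) [:: g] h sd.
rewrite adj // !pair_delta_l => -> //.
  by move=> [g' i'] _; rewrite /h /= mxE; exact: Hh'.
Qed.

End Zorn.

Lemma main_equiv : taut = tau ->
  (surjective_map tau <-> pre_injective tau).
Proof.
move=> sym; split; first exact: surj_preinj.
move=> pi y; apply: exists_sol => f s sf tf.
apply: pi; [by exists s|by exists [::]|].
by rewrite tau0 -sym tf.
Qed.

End Pf.

Theorem corollary1p9 (G : groupType) (K : fieldType) (r : nat)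
  (M : seq G) (A : G -> 'M[K]_r) :
  uniq M ->
  lca_symmetric M A ->
  (surjective_map (lca M A) <-> pre_injective (lca M A)).
Proof. by move=> _ sym; apply: main_equiv. Qed.
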